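(* Let $f\in\mathfrak{F}_{sc}$ (with $n=2$) and let $\rho=\frac12(I+\vec n\cdot\vec\sigma)$ be a qubit state with Bloch vector $\vec n=n(\sin\theta\cos\phi,\sin\theta\sin\phi,\cos\theta)$, where $0<n\le1$, $0\le\theta\le\pi/2$, $0\le\phi<2\pi$. Define $\theta_o=\arccos(n\cos\theta)$ and $\theta_3=\arccos\sqrt{1-n^2\sin^2\theta}$, and the following pure state decompositions of $\rho$: (M) $\mathfrak{D}^{(M)}$: $|\chi_{1,2}\rangle=\cos\frac{\theta_o}{2}|0\rangle\pm e^{i\phi}\sin\frac{\theta_o}{2}|1\rangle$ with probabilities $p_{1,2}=\frac12\big(1\pm\frac{n\sin\theta}{\sin\theta_o}\big)$ (taking $p_{1,2}=\frac12$ if $\sin\theta_o=0$); (s) the spectral decomposition $\mathfrak{D}^{(s)}$: $|\psi_1\rangle=\cos\frac{\theta}{2}|0\rangle+e^{i\phi}\sin\frac{\theta}{2}|1\rangle$ with probability $\frac{1+n}{2}$ and $|\psi_2\rangle=\sin\frac{\theta}{2}|0\rangle-e^{i\phi}\cos\frac{\theta}{2}|1\rangle$ with probability $\frac{1-n}{2}$; (m$_1$) $\mathfrak{D}^{(m_1)}$: $|\psi_1\rangle=\cos\frac{\theta_3}{2}|0\rangle+e^{i\phi}\sin\frac{\theta_3}{2}|1\rangle$ and $|\psi_2\rangle=\sin\frac{\theta_3}{2}|0\rangle+e^{i\phi}\cos\frac{\theta_3}{2}|1\rangle$ with probabilities $p_{1,2}=\frac12\big(1\pm\frac{n\cos\theta}{\cos\theta_3}\big)$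 (taking $p_{1,2}=\frac12$ if $\cos\theta_3=0$). Then these are indeed pure state decompositions of $\rho$, and $$\bar C_f(\mathfrak{D}^{(m_1)})\le\bar C_f(\mathfrak{D}^{(s)})\le\bar C_f(\mathfrak{D}^{(M)})=\max_{\mathfrak{D}}\bar C_f(\mathfrak{D}),$$ where the maximum runs over all pure state decompositions of $\rho$. More explicitly, $\bar C_f(\mathfrak{D}^{(M)})=f(\cos^2\frac{\theta_o}{2},\sin^2\frac{\theta_o}{2})$, $\bar C_f(\mathfrak{D}^{(s)})=f(\cos^2\frac{\theta}{2},\sin^2\frac{\theta}{2})$, $\bar C_f(\mathfrak{D}^{(m_1)})=f(\cos^2\frac{\theta_3}{2},\sin^2\frac{\theta_3}{2})$.
   Context: Reference basis $\{|0\rangle,|1\rangle\}$ of $\mathbb{C}^2$; $\vec\sigma=(\sigma_1,\sigma_2,\sigma_3)$ are the Pauli matrices. Let $\Omega$ be the probability simplex in $\mathbb{R}^2$. $\mathfrak{F}_{sc}$ denotes the set of functions $f:\Omega\to\mathbb{R}$ such that (i) $f((1,0))=0$; (ii) $f(x_1,x_2)=f(x_2,x_1)$; (iii) $f$ is concave. For a unit vector $|\psi\rangle=\psi_0|0\rangle+\psi_1|1\rangle$, $C_f(|\psi\rangle)=f(|\psi_0|^2,|\psi_1|^2)$. A pure state decomposition of $\rho$ is a finite family $\{p_k,|\psi_k\rangle\}$ with $p_k\ge0$, $\sum_kp_k=1$, unit vectors $|\psi_k\rangle$ and $\rho=\sum_kp_k|\psi_k\rangle\langle\psi_k|$; its average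 coherence is $\bar C_f(\mathfrak{D})=\sum_kp_kC_f(|\psi_k\rangle)$. *)

(* Defs.v *)
From HB Require Import structures.
From mathcomp Require Import all_boot all_order all_algebra.
From mathcomp Require Import reals trigo complex.
Set Implicit Arguments. Unset Strict Implicit. Unset Printing Implicit Defensive.
Import Order.TTheory GRing.Theory Num.Theory.
Local Open Scope ring_scope.
Local Open Scope complex_scope.

Section QubitDefs.
Context {R : realType}.
Notation C := R[i].

Definition in_simplex (x1 x2 : R) : Prop := 0 <= x1 /\ 0 <= x2 /\ x1 + x2 = 1.

(* f : Omega -> R is represented as a function of two reals, only ever
   evaluated (and constrained) on the simplex. *)
Definition in_Fsc (f : R -> R -> R) : Prop :=
  f 1 0 = 0 /\
  (forall x1 x2, in_simplex x1 x2 -> f x1 x2 = f x2 x1) /\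
  (forall x1 x2 y1 y2 t, in_simplex x1 x2 -> in_simplex y1 y2 -> 0 <= t <= 1 ->
     t * f x1 x2 + (1 - t) * f y1 y2 <= f (t * x1 + (1 - t) * y1) (t * x2 + (1 - t) * y2)).

Definition sqnorm (z : C) : R := complex.Re z ^+ 2 + complex.Im z ^+ 2.

Definition ket0 : 'cV[C]_2 := delta_mx ord0 ord0.
Definition ket1 : 'cV[C]_2 := delta_mx (lift ord0 ord0) ord0.
Definition amp0 (psi : 'cV[C]_2) : C := psi ord0 ord0.
Definition amp1 (psi : 'cV[C]_2) : C := psi (lift ord0 ord0) ord0.

Definition unit_vec (psi : 'cV[C]_2) : Prop := sqnorm (amp0 psi) + sqnorm (amp1 psi) = 1.

Definition proj (psi : 'cV[C]_2) : 'M[C]_2 := psi *m (map_mx Num.conj psi)^T.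

Definition sigma1 : 'M[C]_2 :=
  delta_mx ord0 (lift ord0 ord0) + delta_mx (lift ord0 ord0) ord0.
Definition sigma2 : 'M[C]_2 :=
  (- 'i) *: delta_mx ord0 (lift ord0 ord0) + 'i *: delta_mx (lift ord0 ord0) ord0.
Definition sigma3 : 'M[C]_2 :=
  delta_mx ord0 ord0 - delta_mx (lift ord0 ord0) (lift ord0 ord0).

Definition bloch_state (n1 n2 n3 : R) : 'M[C]_2 :=
  (2%:R)^-1 *: (1%:M + n1%:C *: sigma1 + n2%:C *: sigma2 + n3%:C *: sigma3).

Definition Cf (f : R -> R -> R) (psi : 'cV[C]_2) : R :=
  f (sqnorm (amp0 psi)) (sqnorm (amp1 psi)).

Definition is_psd (rho : 'M[C]_2) (m : nat) (p : 'I_m -> R) (psi : 'I_m -> 'cV[C]_2) : Prop :=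
  (forall k, 0 <= p k) /\ \sum_(k < m) p k = 1 /\ (forall k, unit_vec (psi k)) /\
  rho = \sum_(k < m) (p k)%:C *: proj (psi k).

Definition avgCf (f : R -> R -> R) (m : nat) (p : 'I_m -> R) (psi : 'I_m -> 'cV[C]_2) : R :=
  \sum_(k < m) p k * Cf f (psi k).

Definition fam2 {T : Type} (a b : T) : 'I_2 -> T := fun k => if k == ord0 then a else b.

Definition qvec (a b : C) : 'cV[C]_2 := a *: ket0 + b *: ket1.

Definition eiphi (phi : R) : C := (cos phi)%:C + 'i * (sin phi)%:C.

(* a / b, with the convention 0 when b = 0 (so that p_{1,2} = 1/2) *)
Definition ratio0 (a b : R) : R := if b == 0 then 0 else a / b.

Definition theta_o (n theta : R) : R := acos (n * cos theta).
Definition theta_3 (n theta : R) : R := acos (Num.sqrt (1 - n ^+ 2 * sin theta ^+ 2)).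

Definition pM (n theta : R) : 'I_2 -> R :=
  let r := ratio0 (n * sin theta) (sin (theta_o n theta)) in
  fam2 (2%:R^-1 * (1 + r)) (2%:R^-1 * (1 - r)).
Definition psiM (n theta phi : R) : 'I_2 -> 'cV[C]_2 :=
  let t := theta_o n theta in
  fam2 (qvec (cos (t / 2%:R))%:C (eiphi phi * (sin (t / 2%:R))%:C))
       (qvec (cos (t / 2%:R))%:C (- (eiphi phi * (sin (t / 2%:R))%:C))).

Definition ps (n : R) : 'I_2 -> R := fam2 ((1 + n) / 2%:R) ((1 - n) / 2%:R).
Definition psis (theta phi : R) : 'I_2 -> 'cV[C]_2 :=
  fam2 (qvec (cos (theta / 2%:R))%:C (eiphi phi * (sin (theta / 2%:R))%:C))
       (qvec (sin (theta / 2%:R))%:C (- (eiphi phi * (cos (theta / 2%:R))%:C))).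

Definition pm1 (n theta : R) : 'I_2 -> R :=
  let r := ratio0 (n * cos theta) (cos (theta_3 n theta)) in
  fam2 (2%:R^-1 * (1 + r)) (2%:R^-1 * (1 - r)).
Definition psim1 (n theta phi : R) : 'I_2 -> 'cV[C]_2 :=
  let t := theta_3 n theta in
  fam2 (qvec (cos (t / 2%:R))%:C (eiphi phi * (sin (t / 2%:R))%:C))
       (qvec (sin (t / 2%:R))%:C (eiphi phi * (cos (t / 2%:R))%:C)).

End QubitDefs.

(* Main.v *)
Require Import Defs.
From HB Require Import structures.
From mathcomp Require Import all_boot all_order all_algebra.
From mathcomp Require Import reals trigo complex.
From mathcomp Require Import ring lra.
Import Order.TTheory GRing.Theory Num.Theory.
Local Open Scope ring_scope.
Local Open Scope complex_scope.

Section S.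
Variable R : realType.
Implicit Types (x y : R[i]).
Local Notation Re := (@complex.Re R).
Local Notation Im := (@complex.Im R).

Lemma cE x y : Re x = Re y -> Im x = Im y -> x = y.
Proof. by case: x => a b; case: y => c d /= -> ->. Qed.
Lemma ReD x y : Re (x + y) = Re x + Re y. Proof. by case: x; case: y. Qed.
Lemma ImD x y : Im (x + y) = Im x + Im y. Proof. by case: x; case: y. Qed.
Lemma ReN x : Re (- x) = - Re x. Proof. by case: x. Qed.
Lemma ImN x : Im (- x) = - Im x. Proof. by case: x. Qed.
Lemma ReM x y : Re (x * y) = Re x * Re y - Im x * Im y. Proof. by case: x; case: y. Qed.
Lemma ImM x y : Im (x * y) = Re x * Im y + Im x * Re y. Proof. by case: x => a b; case: y => c d /=; rewrite addrC. Qed.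
Lemma ReC (a : R) : Re a%:C = a. Proof. by []. Qed.
Lemma ImC (a : R) : Im a%:C = 0. Proof. by []. Qed.
Lemma Re0 : Re (0 : R[i]) = 0. Proof. by []. Qed.
Lemma Im0 : Im (0 : R[i]) = 0. Proof. by []. Qed.
Lemma Re1 : Re (1 : R[i]) = 1. Proof. by []. Qed.
Lemma Im1 : Im (1 : R[i]) = 0. Proof. by []. Qed.
Lemma Rei : Re (Num.imaginary : R[i]) = 0. Proof. by []. Qed.
Lemma Imi : Im (Num.imaginary : R[i]) = 1. Proof. by []. Qed.
Lemma ReJ x : Re (Num.conj x) = Re x. Proof. by case: x. Qed.
Lemma ImJ x : Im (Num.conj x) = - Im x. Proof. by case: x. Qed.
Lemma ReZ (a : R) x : Re (a%:C * x) = a * Re x. Proof. case: x => u v /=. by rewrite mul0r subr0. Qed.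

Lemma sum2 (V : nmodType) (F : 'I_2 -> V) : \sum_(k < 2) F k = F ord0 + F (lift ord0 ord0).
Proof. by rewrite big_ord_recl big_ord1. Qed.

Lemma proj_E (psi : 'cV[R[i]]_2) i j : proj psi i j = psi i ord0 * Num.conj (psi j ord0).
Proof. by rewrite /proj !mxE big_ord1 !mxE. Qed.

Definition i1 : 'I_2 := lift ord0 ord0.

Lemma qvec0 (a b : R[i]) : qvec a b ord0 ord0 = a.
Proof. by rewrite /qvec !mxE /= mulr1 mulr0 addr0. Qed.
Lemma qvec1 (a b : R[i]) : qvec a b i1 ord0 = b.
Proof. by rewrite /qvec !mxE /= mulr1 mulr0 add0r. Qed.

Lemma mxZ (a : R[i]) (A : 'M[R[i]]_2) i j : (a *: A) i j = a * A i j.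
Proof. by rewrite mxE. Qed.
Lemma mxD (A B : 'M[R[i]]_2) i j : (A + B) i j = A i j + B i j.
Proof. by rewrite mxE. Qed.
Lemma mxN (A : 'M[R[i]]_2) i j : (- A) i j = - A i j.
Proof. by rewrite mxE. Qed.
Lemma mx1 i j : (1%:M : 'M[R[i]]_2) i j = (i == j)%:R.
Proof. by rewrite mxE. Qed.
Lemma mxdelta (i0 j0 i j : 'I_2) : (delta_mx i0 j0 : 'M[R[i]]_2) i j = ((i == i0) && (j == j0))%:R.
Proof. by rewrite mxE. Qed.

Lemma ord2_cases (i : 'I_2) : i = ord0 \/ i = i1.
Proof. by case: i => [[|[|//]]] Hi; [left|right]; apply/val_inj. Qed.

Lemma fam2_0 T (a b : T) : fam2 a b ord0 = a. Proof. by []. Qed.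
Lemma fam2_1 T (a b : T) : fam2 a b i1 = b. Proof. by []. Qed.

Lemma ReE1 (phi : R) : Re (eiphi phi) = cos phi.
Proof. rewrite /eiphi /=; lra. Qed.
Lemma ImE1 (phi : R) : Im (eiphi phi) = sin phi.
Proof. rewrite /eiphi /=; lra. Qed.

Lemma projsum (v0 v1 : 'cV[R[i]]_2) (p q : R) i j : ((p%:C *: proj v0) + (q%:C *: proj v1)) i j = p%:C * (v0 i ord0 * Num.conj (v0 j ord0)) +  q%:C * (v1 i ord0 * Num.conj (v1 j ord0)).
Proof. by rewrite mxD mxZ mxZ proj_E proj_E. Qed.

Lemma inv2C : (2^-1 : R[i]) = (2^-1 : R)%:C.
Proof. by rewrite fmorphV rmorph_nat. Qed.

Lemma sigma2E : (sigma2 : 'M[R[i]]_2) = - (Complex 0 1) *: delta_mx ord0 i1 + (Complex 0 1) *: delta_mx i1 ord0.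
Proof. by []. Qed.
Lemma ReCo (a b : R) : Re (Complex a b) = a. Proof. by []. Qed.
Lemma ImCo (a b : R) : Im (Complex a b) = b. Proof. by []. Qed.
Lemma eqo0 : (ord0 == ord0 :> 'I_2) = true. Proof. by []. Qed.
Lemma eqo1 : (i1 == i1 :> 'I_2) = true. Proof. by []. Qed.
Lemma eqo01 : (ord0 == i1 :> 'I_2) = false. Proof. by []. Qed.
Lemma eqo10 : (i1 == ord0 :> 'I_2) = false. Proof. by []. Qed.
Lemma natT : (true%:R : R[i]) = 1. Proof. by []. Qed.
Lemma natF : (false%:R : R[i]) = 0. Proof. by []. Qed.

Ltac blo := rewrite /bloch_state /sigma1 sigma2E /sigma3 !mxE -/i1 ?eqo0 ?eqo1 ?eqo01 ?eqo10 /= ?natT ?natF inv2C; apply: cE;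
 rewrite !(ReD, ImD, ReM, ImM, ReN, ImN, ReC, ImC, Re0, Im0, Re1, Im1, ReCo, ImCo); lra.
Lemma bloch00 (n1 n2 n3 : R) : bloch_state n1 n2 n3 ord0 ord0 = ((1 + n3)/2)%:C.
Proof. blo. Qed.
Lemma bloch01 (n1 n2 n3 : R) : bloch_state n1 n2 n3 ord0 i1 = Complex (n1/2) (- (n2/2)).
Proof. blo. Qed.
Lemma bloch10 (n1 n2 n3 : R) : bloch_state n1 n2 n3 i1 ord0 = Complex (n1/2) (n2/2).
Proof. blo. Qed.
Lemma bloch11 (n1 n2 n3 : R) : bloch_state n1 n2 n3 i1 i1 = ((1 - n3)/2)%:C.
Proof. blo. Qed.

Lemma bloch01R (n1 n2 n3 : R) : Re (bloch_state n1 n2 n3 ord0 i1) = n1/2. Proof. by rewrite bloch01. Qed.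
Lemma bloch01I (n1 n2 n3 : R) : Im (bloch_state n1 n2 n3 ord0 i1) = - (n2/2). Proof. by rewrite bloch01. Qed.
Lemma bloch10R (n1 n2 n3 : R) : Re (bloch_state n1 n2 n3 i1 ord0) = n1/2. Proof. by rewrite bloch10. Qed.
Lemma bloch10I (n1 n2 n3 : R) : Im (bloch_state n1 n2 n3 i1 ord0) = n2/2. Proof. by rewrite bloch10. Qed.

Lemma eiphiE (phi : R) : eiphi phi = Complex (cos phi) (sin phi).
Proof. by apply: cE; rewrite ?ReE1 ?ImE1. Qed.

Lemma psd2 (r z phi x0 y0 x1 y1 p0 p1 : R) :
 p0 * x0^+2 + p1 * x1^+2 = (1+z)/2 ->
 p0 * y0^+2 + p1 * y1^+2 = (1-z)/2 ->
 p0*x0*y0 + p1*x1*y1 = r/2 ->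
 bloch_state (r * cos phi) (r * sin phi) z = \sum_(k<2) (fam2 p0 p1 k)%:C *:
   proj (fam2 (qvec x0%:C (eiphi phi * y0%:C)) (qvec x1%:C (eiphi phi * y1%:C)) k).
Proof.
move=> h1 h2 h3; have cs := cos2Dsin2 phi.
have h4 : p0*y0^+2*(cos phi ^+2 + sin phi ^+2) = p0*y0^+2 by rewrite cs mulr1.
have h5 : p1*y1^+2*(cos phi ^+2 + sin phi ^+2) = p1*y1^+2 by rewrite cs mulr1.
rewrite sum2 fam2_0 fam2_1; apply/matrixP => i j; rewrite [RHS]projsum.
case: (ord2_cases i) => ->; case: (ord2_cases j) => ->;
 rewrite ?bloch00 ?bloch11 ?qvec0 ?qvec1 ?eiphiE; apply: cE;
 rewrite ?bloch01R ?bloch01I ?bloch10R ?bloch10I;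
 rewrite !(ReD, ImD, ReM, ImM, ReN, ImN, ReJ, ImJ, ReC, ImC, Re0, Im0, Re1, Im1, ReCo, ImCo); nra.
Qed.

Lemma sqnorm_q0 (x y phi : R) : sqnorm (amp0 (qvec x%:C (eiphi phi * y%:C))) = x^+2.
Proof. rewrite /sqnorm /amp0 qvec0 ReC ImC; lra. Qed.
Lemma sqnorm_q1 (x y phi : R) : sqnorm (amp1 (qvec x%:C (eiphi phi * y%:C))) = y^+2.
Proof.
have cs := cos2Dsin2 phi.
rewrite /sqnorm /amp1 -/i1 qvec1 eiphiE ReM ImM ReCo ImCo ReC ImC.
have -> : (cos phi * y - sin phi * 0) ^+ 2 + (cos phi * 0 + sin phi * y) ^+ 2 = y^+2 * (cos phi ^+2 + sin phi ^+2) by ring.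
by rewrite cs mulr1.
Qed.

Lemma is_psd2 (r z phi x0 y0 x1 y1 p0 p1 : R) :
 0 <= p0 -> 0 <= p1 -> p0 + p1 = 1 -> x0^+2 + y0^+2 = 1 -> x1^+2 + y1^+2 = 1 ->
 p0 * x0^+2 + p1 * x1^+2 = (1+z)/2 ->
 p0 * y0^+2 + p1 * y1^+2 = (1-z)/2 ->
 p0*x0*y0 + p1*x1*y1 = r/2 ->
 is_psd (bloch_state (r * cos phi) (r * sin phi) z) (fam2 p0 p1)
   (fam2 (qvec x0%:C (eiphi phi * y0%:C)) (qvec x1%:C (eiphi phi * y1%:C))).
Proof.
move=> hp0 hp1 hs hu0 hu1 h1 h2 h3; split; first by move=> k; case: (ord2_cases k) => ->.
split; first by rewrite sum2.
split; last exact: psd2.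
by move=> k; case: (ord2_cases k) => ->; rewrite /unit_vec ?fam2_0 ?fam2_1 sqnorm_q0 sqnorm_q1.
Qed.

Lemma avg2 (f : R -> R -> R) (phi x0 y0 x1 y1 p0 p1 : R) :
  avgCf f (fam2 p0 p1) (fam2 (qvec x0%:C (eiphi phi * y0%:C)) (qvec x1%:C (eiphi phi * y1%:C)))
  = p0 * f (x0^+2) (y0^+2) + p1 * f (x1^+2) (y1^+2).
Proof. by rewrite /avgCf sum2 /Cf !sqnorm_q0 !sqnorm_q1. Qed.

Lemma psdM_lem (z r phi rM cM sM w : R) :
  cM^+2 = (1+z)/2 -> sM^+2 = (1-z)/2 -> cM*sM = w/2 -> rM * w = r -> 0 <= rM -> rM <= 1 ->
  is_psd (bloch_state (r*cos phi) (r * sin phi) z) (fam2 (2^-1*(1+rM)) (2^-1*(1-rM)))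
    (fam2 (qvec cM%:C (eiphi phi*sM%:C)) (qvec cM%:C (eiphi phi * (-sM)%:C))).
Proof.
move=> h1 h2 h3 h4 h5 h6; apply: is_psd2; try lra.
have -> : 2^-1 * (1 + rM) * cM * sM + 2^-1 * (1 - rM) * cM * - sM = rM * (cM * sM) by field.
by rewrite h3 -h4; lra.
Qed.

Lemma psds_lem (n ct st phi cS sS : R) :
  cS^+2 = (1+ct)/2 -> sS^+2 = (1-ct)/2 -> cS*sS = st/2 -> 0 <= n -> n <= 1 ->
  is_psd (bloch_state ((n * st)*cos phi) ((n * st) * sin phi) (n * ct)) (fam2 ((1+n)/2) ((1-n)/2))
    (fam2 (qvec cS%:C (eiphi phi*sS%:C)) (qvec sS%:C (eiphi phi * (-cS)%:C))).
Proof.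
move=> h1 h2 h3 h5 h6; apply: is_psd2; rewrite ?sqrrN ?h1 ?h2; try lra.
have -> : (1 + n) / 2 * cS * sS + (1 - n) / 2 * sS * - cS = n * (cS * sS) by field.
by rewrite h3; lra.
Qed.

Lemma psdm1_lem (z r q phi r3 c3 s3 : R) :
  c3^+2 = (1+q)/2 -> s3^+2 = (1-q)/2 -> c3*s3 = r/2 -> r3 * q = z -> 0 <= r3 -> r3 <= 1 ->
  is_psd (bloch_state (r*cos phi) (r * sin phi) z) (fam2 (2^-1*(1+r3)) (2^-1*(1-r3)))
    (fam2 (qvec c3%:C (eiphi phi*s3%:C)) (qvec s3%:C (eiphi phi * c3%:C))).
Proof.
move=> h1 h2 h3 h4 h5 h6; apply: is_psd2; rewrite ?sqrrN ?h1 ?h2; try lra.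
Qed.

Lemma ReMJ x : Re (x * Num.conj x) = sqnorm x.
Proof. by rewrite ReM ReJ ImJ /sqnorm; ring. Qed.

Lemma psd_diag m (p : 'I_m -> R) (psi : 'I_m -> 'cV[R[i]]_2) (n1 n2 n3 : R) :
  bloch_state n1 n2 n3 = \sum_(k < m) (p k)%:C *: proj (psi k) ->
  \sum_(k < m) p k * sqnorm (amp0 (psi k)) = (1+n3)/2 /\
  \sum_(k < m) p k * sqnorm (amp1 (psi k)) = (1-n3)/2.
Proof.
move=> E; split.
  have := congr1 (fun M : 'M[R[i]]_2 => Re (M ord0 ord0)) E; rewrite /= bloch00 ReC => ->.
  rewrite summxE (big_morph Re ReD Re0); apply: eq_bigr => k _.
  by rewrite mxZ proj_E ReZ ReMJ.
have := congr1 (fun M : 'M[R[i]]_2 => Re (M i1 i1)) E; rewrite /= bloch11 ReC => ->.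
rewrite summxE (big_morph Re ReD Re0); apply: eq_bigr => k _.
by rewrite mxZ proj_E ReZ ReMJ.
Qed.
End S.

Section J.
Variable R : realType.

Lemma jensen (f : R -> R -> R) : in_Fsc f -> forall m (p u v : 'I_m -> R),
  (forall k, 0 <= p k) -> \sum_(k < m) p k = 1 -> (forall k, in_simplex (u k) (v k)) ->
  \sum_(k < m) p k * f (u k) (v k) <= f (\sum_(k < m) p k * u k) (\sum_(k < m) p k * v k)
  /\ in_simplex (\sum_(k < m) p k * u k) (\sum_(k < m) p k * v k).
Proof.
move=> [_ [_ hc]]; elim=> [|m IH] p u v hp hs hin.
  by move: hs; rewrite big_ord0 => /eqP; rewrite eq_sym oner_eq0.
move: hs; rewrite !big_ord_recr /=.
set S := \sum_(i < m) p (widen_ord (leqnSn m) i) => hs.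
set q := p ord_max.
have S0 : 0 <= S by apply: sumr_ge0 => i _.
have [ul vl] : in_simplex (u ord_max) (v ord_max) by [].
case: (hin ord_max) => hu [hv huv].
have hq := hp ord_max.
have [Sz|Sp] := eqVneq S 0.
  have pz : forall i : 'I_m, p (widen_ord (leqnSn m) i) = 0.
    move=> i; move/eqP: Sz; rewrite /S psumr_eq0 => [/allP H|i0 _ //].
    by apply/eqP; apply: H; rewrite mem_index_enum.
  have q1 : q = 1 by move: hs; rewrite Sz add0r.
  have Z : forall w : 'I_m -> R, \sum_(i < m) p (widen_ord (leqnSn m) i) * w i = 0.
    by move=> w; apply: big1 => i _; rewrite pz mul0r.
  rewrite (Z (fun i => f (u (widen_ord (leqnSn m) i)) (v (widen_ord (leqnSn m) i)))).
  rewrite (Z (fun i => u (widen_ord (leqnSn m) i))) (Z (fun i => v (widen_ord (leqnSn m) i))).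
  by rewrite !add0r q1 !mul1r; split.
have Spos : 0 < S by rewrite lt_def Sp S0.
pose p' := fun i : 'I_m => p (widen_ord (leqnSn m) i) / S.
pose u' := fun i : 'I_m => u (widen_ord (leqnSn m) i).
pose v' := fun i : 'I_m => v (widen_ord (leqnSn m) i).
have hp' : forall k, 0 <= p' k by move=> k; rewrite /p' divr_ge0.
have hs' : \sum_(k < m) p' k = 1 by rewrite /p' -mulr_suml -/S divff.
have [IH1 IH2] := IH p' u' v' hp' hs' (fun k => hin _).
have E : forall (w : 'I_m.+1 -> R),
   \sum_(i < m) p (widen_ord (leqnSn m) i) * w (widen_ord (leqnSn m) i)
   = S * \sum_(k < m) p' k * w (widen_ord (leqnSn m) k).
  move=> w; rewrite mulr_sumr; apply: eq_bigr => i _; rewrite /p'.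
  by rewrite mulrA mulrCA divff // mulr1.
rewrite (E (fun k => f (u k) (v k))) (E u) (E v) -/q.
set A := \sum_(k < m) _ in IH1 *.
set Y1 := \sum_(k < m) p' k * u' k in IH1 IH2 *.
set Y2 := \sum_(k < m) p' k * v' k in IH1 IH2 *.

have qE : q = 1 - S by rewrite /q; lra.
case: IH2 => y1 [y2 y12].
have S1 : S <= 1 by lra.
have C := hc Y1 Y2 (u ord_max) (v ord_max) S (conj y1 (conj y2 y12)) (hin ord_max) (introT andP (conj S0 S1)).
rewrite qE; split; last first.
  rewrite /in_simplex; split; first by apply: addr_ge0; [apply: mulr_ge0|apply: mulr_ge0; lra].
  split; first by apply: addr_ge0; [apply: mulr_ge0|apply: mulr_ge0; lra].
  by rewrite addrACA -!mulrDr y12 huv !mulr1 addrC subrK.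
apply: le_trans C; rewrite lerD2r; exact: ler_wpM2l.
Qed.
End J.

Section K.
Variable R : realType.

Lemma half (t : R) : [/\ cos (t/2)^+2 = (1 + cos t)/2, sin (t/2)^+2 = (1 - cos t)/2 &
   cos (t/2) * sin (t/2) = sin t / 2].
Proof.
have c := cosD (t/2) (t/2); have s := sinD (t/2) (t/2); rewrite -splitr in c s.
have := cos2Dsin2 (t/2); split; nra.
Qed.

Lemma mono (f : R -> R -> R) (a b : R) : in_Fsc f -> 0 <= a -> a <= b -> b <= 1 ->
  f ((1+b)/2) ((1-b)/2) <= f ((1+a)/2) ((1-a)/2).
Proof.
move=> [_ [hs hc]] a0 ab b1.
have [b0|bn0] := eqVneq b 0.
  have -> : a = b by lra.
  by [].
have bpos : 0 < b by rewrite lt_def bn0 /=; lra.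
set t := (a + b) / (2 * b).
have t0 : 0 <= t by rewrite /t divr_ge0 //; lra.
have t1 : t <= 1 by rewrite /t ler_pdivrMr; lra.
have X : in_simplex ((1+b)/2) ((1-b)/2) by rewrite /in_simplex; lra.
have Y : in_simplex ((1-b)/2) ((1+b)/2) by rewrite /in_simplex; lra.
have C := hc _ _ _ _ t X Y (introT andP (conj t0 t1)).
rewrite (hs _ _ Y) in C.
have e1 : t * ((1 + b) / 2) + (1 - t) * ((1 - b) / 2) = (1 + a)/2.
  by rewrite /t; field; rewrite ?mulf_neq0 ?pnatr_eq0.

have e2 : t * ((1 - b) / 2) + (1 - t) * ((1 + b) / 2) = (1 - a)/2.
  by rewrite /t; field; rewrite ?mulf_neq0 ?pnatr_eq0.

rewrite e1 e2 in C; apply: le_trans C; lra.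
Qed.

Lemma ratio_facts (a b : R) : 0 <= a -> 0 <= b -> a^+2 <= b^+2 ->
  (0 <= Defs.ratio0 a b <= 1) /\ (Defs.ratio0 a b * b = a).
Proof.
move=> a0 b0 ab; rewrite /Defs.ratio0; case: eqP => [bz|bn].
  rewrite bz in ab; split; first by rewrite lexx ler01.
  nra.
have bp : 0 < b by rewrite lt_def b0 andbT; apply/eqP.
have aleb : a <= b by nra.
split; last by rewrite divfK //; apply/eqP.
by rewrite divr_ge0 //= ler_pdivrMr // mul1r.
Qed.
End K.

Theorem mainTheorem5 (R : realType) (f : R -> R -> R) (n theta phi : R) :
  in_Fsc f ->
  0 < n <= 1 -> 0 <= theta <= pi / 2%:R -> 0 <= phi < 2%:R * pi ->
  let rho := bloch_state (n * sin theta * cos phi) (n * sin theta * sin phi) (n * cos theta) in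
  let tho := theta_o n theta in
  let th3 := theta_3 n theta in
  [/\ [/\ is_psd rho (pM n theta) (psiM n theta phi),
          is_psd rho (ps n) (psis theta phi) &
          is_psd rho (pm1 n theta) (psim1 n theta phi)],
      avgCf f (pm1 n theta) (psim1 n theta phi) <= avgCf f (ps n) (psis theta phi)
        /\ avgCf f (ps n) (psis theta phi) <= avgCf f (pM n theta) (psiM n theta phi),
      (forall (m : nat) (p : 'I_m -> R) (psi : 'I_m -> 'cV[R[i]]_2),
         is_psd rho p psi -> avgCf f p psi <= avgCf f (pM n theta) (psiM n theta phi)) &
      [/\ avgCf f (pM n theta) (psiM n theta phi) = f (cos (tho / 2%:R) ^+ 2) (sin (tho / 2%:R) ^+ 2),
          avgCf f (ps n) (psis theta phi) = f (cos (theta / 2%:R) ^+ 2) (sin (theta / 2%:R) ^+ 2) &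
          avgCf f (pm1 n theta) (psim1 n theta phi) = f (cos (th3 / 2%:R) ^+ 2) (sin (th3 / 2%:R) ^+ 2)]].
Proof.
move=> hf /andP[n0 n1] /andP[t0 t1] _ rho tho th3.
have hf' := hf; case: hf' => [f10 [fsym fconc]].
set ct := cos theta; set st := sin theta.
have pi0 : (0:R) <= pi := pi_ge0 R.
have ct0 : 0 <= ct by apply: cos_ge0_pihalf; apply/andP; split; lra.
have st0 : 0 <= st by apply: sin_ge0_pi; apply/andP; split; lra.
have cst : ct^+2 + st^+2 = 1 := cos2Dsin2 theta.
have ct1 : ct <= 1 := cos_le1 theta.
have st1 : st <= 1 := sin_le1 theta.
have nct0 : 0 <= n * ct by apply: mulr_ge0 => //; lra.
have nst0 : 0 <= n * st by apply: mulr_ge0 => //; lra.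
have hco : cos tho = n*ct.
  by rewrite /tho /theta_o -/ct acosK // in_itv /=; apply/andP; split; nra.
have hso : sin tho = Num.sqrt (1 - (n*ct)^+2).
  by rewrite /tho /theta_o -/ct sin_acos //; apply/andP; split; nra.
set w := Num.sqrt (1 - (n*ct)^+2) in hso.
have w0 : 0 <= w := sqrtr_ge0 _.
have w2 : w^+2 = 1 - (n*ct)^+2 by rewrite sqr_sqrtr //; nra.
set q := Num.sqrt (1 - n^+2 * st^+2).
have q0 : 0 <= q := sqrtr_ge0 _.
have q2 : q^+2 = 1 - n^+2 * st^+2 by rewrite sqr_sqrtr //; nra.
have q1 : q <= 1 by nra.
have hn2 : n^+2 <= 1 by nra.
have hst2 : 0 <= st^+2 := sqr_ge0 st.
have hnst : n^+2 * st^+2 <= st^+2 by nra.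
have ctq2 : ct^+2 <= q^+2 by rewrite q2; lra.
have ctq : ct <= q by nra.
have nctct : n * ct <= ct by nra.
have hc3 : cos th3 = q.
  by rewrite /th3 /theta_3 -/st -/q acosK // in_itv /=; apply/andP; split; lra.
have hs3 : sin th3 = n * st.
  rewrite /th3 /theta_3 -/st -/q sin_acos; last by apply/andP; split; lra.
  rewrite -/q q2.
  have -> : 1 - (1 - n^+2 * st^+2) = (n*st)^+2 by ring.
  by rewrite sqrtr_sqr ger0_norm.
case: (@half _ tho) => cM2 sM2 csM; rewrite hco in cM2 sM2.
case: (@half _ theta) => cS2 sS2 csS.
case: (@half _ th3) => c32 s32 cs3; rewrite hc3 in c32 s32; rewrite hs3 in cs3.
have := @ratio_facts _ (n*st) w nst0 w0 ltac:(rewrite w2; nra).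
rewrite -hso; case=> /andP[rM0 rM1] rMw.
have := @ratio_facts _ (n*ct) q nct0 q0 ltac:(rewrite q2; nra).
rewrite -hc3; case=> /andP[r30 r31] r3w.
set rM := Defs.ratio0 (n * st) (sin tho) in rM0 rM1 rMw.
set r3 := Defs.ratio0 (n * ct) (cos th3) in r30 r31 r3w.
rewrite hc3 in r3w.
rewrite -/ct -/st in cS2 sS2 csS.
set cM := cos (tho / 2) in cM2 csM *; set sM := sin (tho / 2) in sM2 csM *.
set cS := cos (theta / 2) in cS2 csS *; set sS := sin (theta / 2) in sS2 csS *.
set c3 := cos (th3 / 2) in c32 cs3 *; set s3 := sin (th3 / 2) in s32 cs3 *.
have EpM : pM n theta = fam2 (2^-1 * (1 + rM)) (2^-1 * (1 - rM)) by [].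
have EpsiM : psiM n theta phi = fam2 (qvec cM%:C (eiphi phi * sM%:C)) (qvec cM%:C (eiphi phi * (- sM)%:C)).
  by rewrite /psiM rmorphN mulrN.
have Eps : ps n = fam2 ((1+n)/2) ((1-n)/2) by [].
have Epsis : psis theta phi = fam2 (qvec cS%:C (eiphi phi * sS%:C)) (qvec sS%:C (eiphi phi * (- cS)%:C)).
  by rewrite /psis rmorphN mulrN.
have Epm1 : pm1 n theta = fam2 (2^-1 * (1 + r3)) (2^-1 * (1 - r3)) by [].
have Epsim1 : psim1 n theta phi = fam2 (qvec c3%:C (eiphi phi * s3%:C)) (qvec s3%:C (eiphi phi * c3%:C)) by [].
have Erho : rho = bloch_state ((n*st) * cos phi) ((n*st) * sin phi) (n*ct) by [].
have AM : avgCf f (pM n theta) (psiM n theta phi) = f (cM^+2) (sM^+2).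
  rewrite EpM EpsiM avg2 sqrrN -mulrDl.
  have -> : 2^-1 * (1 + rM) + 2^-1 * (1 - rM) = 1 by field.
  by rewrite mul1r.
have As : avgCf f (ps n) (psis theta phi) = f (cS^+2) (sS^+2).
  rewrite Eps Epsis avg2 sqrrN (fsym (sS^+2) (cS^+2)); last first.
    by rewrite /in_simplex; split; [exact: sqr_ge0|split; [exact: sqr_ge0|rewrite addrC; exact: cos2Dsin2]].
  rewrite -mulrDl.
  have -> : (1 + n) / 2 + (1 - n) / 2 = 1 by field.
  by rewrite mul1r.
have Am1 : avgCf f (pm1 n theta) (psim1 n theta phi) = f (c3^+2) (s3^+2).
  rewrite Epm1 Epsim1 avg2 (fsym (s3^+2) (c3^+2)); last first.
    by rewrite /in_simplex; split; [exact: sqr_ge0|split; [exact: sqr_ge0|rewrite addrC; exact: cos2Dsin2]].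
  rewrite -mulrDl.
  have -> : 2^-1 * (1 + r3) + 2^-1 * (1 - r3) = 1 by field.
  by rewrite mul1r.
split.
- split.
  + rewrite Erho EpM EpsiM; exact: (@psdM_lem _ _ _ _ _ _ _ _ cM2 sM2 csM rMw rM0 rM1).
  + rewrite Erho Eps Epsis; exact: (@psds_lem _ _ _ _ _ _ _ cS2 sS2 csS (ltW n0) n1).
  + rewrite Erho Epm1 Epsim1; exact: (@psdm1_lem _ _ _ _ _ _ _ _ c32 s32 cs3 r3w r30 r31).
- rewrite AM As Am1 cM2 sM2 cS2 sS2 c32 s32; split.
  + exact: (@mono _ _ _ _ hf ct0 ctq q1).
  + exact: (@mono _ _ _ _ hf nct0 nctct ct1).
- move=> m p psi [hp [hs [hu hrho]]].
  rewrite Erho in hrho.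
  have [d0 d1] := @psd_diag _ _ _ _ _ _ _ hrho.
  have hsimp : forall k, in_simplex (sqnorm (amp0 (psi k))) (sqnorm (amp1 (psi k))).
    move=> k; split; first by rewrite /sqnorm addr_ge0 ?sqr_ge0.
    split; first by rewrite /sqnorm addr_ge0 ?sqr_ge0.
    exact: hu.
  have [J _] := @jensen _ f hf m p (fun k => sqnorm (amp0 (psi k))) (fun k => sqnorm (amp1 (psi k))) hp hs hsimp.
  rewrite AM cM2 sM2 -d0 -d1; exact: J.
- by split.
Qed.
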